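(* Let $IS\in\{\Box,\blacksquare\}^2$ and let $\tau$ be a correct compositional translation from $\mathrm{SYNCSIMPLE}$ into $\mathrm{LOCKSIMPLE}_{2,IS}$ of blocking type $(P_iP_i,P_jP_j)$ with $i,j\in\{1,2\}$. Then $i\neq j$.
   Context: $\mathrm{SYNCSIMPLE}$: subprocesses $\mathcal{U} ::= \checkmark \mid 0 \mid\, !\mathcal{U} \mid\, ?\mathcal{U}$; processes are finite parallel compositions $\mathcal{U}_1\mid\cdots\mid\mathcal{U}_n$ ($\mid$ associative, commutative, $0$ a unit). Reduction: $!\mathcal{U}_1\mid ?\mathcal{U}_2\mid \mathcal{P}\to \mathcal{U}_1\mid\mathcal{U}_2\mid\mathcal{P}$. Successful: of form $\checkmark\mid\mathcal{P}$; may-convergent: reduces to a successful process; must-convergent: every reachable process is may-convergent. $\mathrm{LOCKSIMPLE}_{k,IS}$ ($IS\in\{\Box,\blacksquare\}^k$, $\Box$ empty, $\blacksquare$ full): subprocesses are words over $\{P_1,T_1,\dots,P_k,T_k\}$ followed by $0$ or $\checkmark$; states $(\mathcal{P},C)$ reduce by $(P_i\mathcal{U}\mid\mathcal{P},C)\to(\mathcal{U}\mid\mathcal{P},C[C_i:=\blacksquare])$ only if $C_i=\Box$, and $(T_i\mathcal{U}\mid\mathcal{P},C)\to(\mathcal{U}\mid\mathcal{P},C[C_i:=\Box])$ always. Success = process contains $\checkmark$; a process $\mathcal{P}$ is may/must-convergent iff the state $(\mathcal{P},IS)$ is (defined as in SYNCSIMPLE). A compositional translation $\tau$ is given by words $\tau(!),\tau(?)$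 with $\tau(0)=0$, $\tau(\checkmark)=\checkmark$, $\tau(!\mathcal{U})=\tau(!)\tau(\mathcal{U})$, $\tau(?\mathcal{U})=\tau(?)\tau(\mathcal{U})$, $\tau$ commuting with $\mid$; correct = preserves and reflects may- and must-convergence. Blocking type: for a word $S$ over $\{P_i,T_i\}$, run $S$ as a single subprocess from store $IS$. If it gets stuck at an occurrence of $P_i$ (lock $i$ full), the prefix ending with that occurrence is the blocking prefix; if that occurrence is the first symbol of $\{P_i,T_i\}$ in $S$ (prefix of form $RP_i$, $R$ without $P_i,T_i$) the blocking type of $S$ is $P_i$, otherwise the blocking prefix has form $R_1P_iR_2P_i$ with $R_2$ containing no $P_i,T_i$ and the blocking type is $P_iP_i$. $\tau$ has blocking type $(W_1,W_2)$ if $W_1$ is the blocking type of $\tau(!)$ and $W_2$ that of $\tau(?)$. *)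

(* Defs.v *)
From mathcomp Require Import all_boot.
From Stdlib Require Import Permutation Relation_Operators.
Set Implicit Arguments. Unset Strict Implicit. Unset Printing Implicit Defensive.

Inductive sync_sub : Type :=
| SCheck : sync_sub
| SZero  : sync_sub
| SSend  : sync_sub -> sync_sub
| SRecv  : sync_sub -> sync_sub .

(* processes: finite parallel compositions, as lists (| assoc./comm. via Permutation) *)
Definition sync_proc := seq sync_sub.

Definition sync_step (P Q : sync_proc) : Prop :=
  exists u1 u2 R, Permutation P (SSend u1 :: SRecv u2 :: R) /\ Q = u1 :: u2 :: R.

Definition sync_successful (P : sync_proc) : Prop := List.In SCheck P.

Definition sync_reach := clos_refl_trans sync_proc sync_step.

Definition sync_may (P : sync_proc) : Prop :=
  exists Q, sync_reach P Q /\ sync_successful Q.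

Definition sync_must (P : sync_proc) : Prop :=
  forall Q, sync_reach P Q -> sync_may Q.

Inductive lsym (k : nat) : Type :=
| LP : 'I_k -> lsym k
| LT : 'I_k -> lsym k.

(* a subprocess: a word over {P_i,T_i} followed by 0 (false) or ✓ (true) *)
Definition lock_sub (k : nat) : Type := (seq (lsym k) * bool)%type.
Definition lock_proc (k : nat) : Type := seq (lock_sub k).

(* store: true = full (■), false = empty (□) *)
Definition store (k : nat) : Type := 'I_k -> bool.

Definition upd (k : nat) (C : store k) (i : 'I_k) (b : bool) : store k :=
  fun j => if j == i then b else C j.

Definition lock_step (k : nat) (s1 s2 : lock_proc k * store k) : Prop :=
  let: (P, C) := s1 in
  exists (a : lsym k) (w : seq (lsym k)) (e : bool) (R : lock_proc k),
    Permutation P ((a :: w, e) :: R) /\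
    match a with
    | LP i => C i = false /\ s2 = ((w, e) :: R, upd C i true)
    | LT i => s2 = ((w, e) :: R, upd C i false)
    end.

Definition lock_successful (k : nat) (s : lock_proc k * store k) : Prop :=
  List.In ([::], true) s.1.

Definition lock_reach (k : nat) := clos_refl_trans (lock_proc k * store k) (@lock_step k).

Definition lock_may_state (k : nat) (s : lock_proc k * store k) : Prop :=
  exists s', lock_reach s s' /\ lock_successful s'.

Definition lock_must_state (k : nat) (s : lock_proc k * store k) : Prop :=
  forall s', lock_reach s s' -> lock_may_state s'.

Definition lock_may (k : nat) (IS : store k) (P : lock_proc k) := lock_may_state (P, IS).
Definition lock_must (k : nat) (IS : store k) (P : lock_proc k) := lock_must_state (P, IS).

Fixpoint tau_sub (k : nat) (wsend wrecv : seq (lsym k)) (u : sync_sub) : lock_sub k :=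
  match u with
  | SCheck => ([::], true)
  | SZero => ([::], false)
  | SSend u' => let: (w, e) := tau_sub wsend wrecv u' in (wsend ++ w, e)
  | SRecv u' => let: (w, e) := tau_sub wsend wrecv u' in (wrecv ++ w, e)
  end.

Definition tau (k : nat) (wsend wrecv : seq (lsym k)) (P : sync_proc) : lock_proc k :=
  map (tau_sub wsend wrecv) P.

Definition correct_translation (k : nat) (IS : store k) (wsend wrecv : seq (lsym k)) : Prop :=
  forall P : sync_proc,
    (sync_may P <-> lock_may IS (tau wsend wrecv P)) /\
    (sync_must P <-> lock_must IS (tau wsend wrecv P)).

Inductive btype (k : nat) : Type :=
| BP  : 'I_k -> btype k
| BPP : 'I_k -> btype k.

(* run a word as a single subprocess; [seen i] records whether a symbol of
   {P_i, T_i} has already occurred in the executed prefix *)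
Fixpoint run_block (k : nat) (C : store k) (seen : 'I_k -> bool) (S : seq (lsym k))
  : option (btype k) :=
  match S with
  | [::] => None
  | LP i :: S' => if C i then Some (if seen i then BPP i else BP i)
                  else run_block (upd C i true) (upd seen i true) S'
  | LT i :: S' => run_block (upd C i false) (upd seen i true) S'
  end.

Definition blocking_type (k : nat) (IS : store k) (S : seq (lsym k)) : option (btype k) :=
  run_block IS (fun _ => false) S.

(* Main.v *)
Require Import Defs.
From mathcomp Require Import all_boot.
From Stdlib Require Import Permutation Relation_Operators FunctionalExtensionality.

Set Implicit Arguments.
Unset Strict Implicit.

Definition idx (x : lsym 2) : 'I_2 := match x with LP j => j | LT j => j end.

Fixpoint exec (C : store 2) (w : seq (lsym 2)) : seq (lsym 2) * store 2 :=
  match w with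
  | [::] => ([::], C)
  | LP j :: w' => if C j then (w, C) else exec (upd C j true) w'
  | LT j :: w' => exec (upd C j false) w'
  end.

Definition stuckw (D : store 2) (w : seq (lsym 2)) :=
  exists j w', w = LP j :: w' /\ D j = true.

Definition ifree (i : 'I_2) (v : seq (lsym 2)) := all (fun x => idx x != i) v.

Definition Good i C w := exists w', (exec C w).1 = LP i :: w'.

Definition Sec i (w : seq (lsym 2)) := forall C', C' i = true ->
  stuckw (exec C' w).2 (exec C' w).1 /\ (exec C' w).2 i = true.

Lemma ord2_other (i j j' : 'I_2) : j != i -> j' != i -> j = j'.
Proof.
by case: i j j' => [[|[|?]] ?] [[|[|?]] ?] [[|[|?]] ?] //= _ _; apply: val_inj.
Qed.

Lemma exec_stuck C w : (exec C w).1 = [::] \/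
  exists j w', (exec C w).1 = LP j :: w' /\ (exec C w).2 j = true.
Proof.
elim: w C => [|[j|j] w IH] C /=; first by left.
- case: ifP => Hc; last exact: IH.
  by right; exists j, w.
- exact: IH.
Qed.

Lemma run_reach w e R P C : Permutation P ((w,e)::R) ->
  exists P', Permutation P' (((exec C w).1, e)::R) /\
             lock_reach (P,C) (P', (exec C w).2).
Proof.
elim: w P C => [|[j|j] w IH] P C HP /=.
- by exists P; split => //; apply: rt_refl.
- case: ifP => Hc.
  + by exists P; split => //; apply: rt_refl.
  + have [P' [HP' Hr]] := IH ((w,e)::R) (upd C j true) (Permutation_refl _).
    exists P'; split => //.
    apply: rt_trans Hr; apply: rt_step.
    by exists (LP j), w, e, R; split.
- have [P' [HP' Hr]] := IH ((w,e)::R) (upd C j false) (Permutation_refl _).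
  exists P'; split => //.
  apply: rt_trans Hr; apply: rt_step.
  by exists (LT j), w, e, R; split.
Qed.

Lemma exec_cat C x y : exec C (x ++ y) =
  if (exec C x).1 is [::] then exec (exec C x).2 y
  else ((exec C x).1 ++ y, (exec C x).2).
Proof.
elim: x C => [|[j|j] x IH] C //=.
by case: ifP.
Qed.

Lemma exec_ifree_i C v i : ifree i v -> (exec C v).2 i = C i.
Proof.
elim: v C => [|[j|j] v IH] C //= /andP [Hj Hv].
- case: ifP => _ //. by rewrite IH // /upd eq_sym (negbTE Hj).
- by rewrite IH // /upd eq_sym (negbTE Hj).
Qed.

Lemma exec_suffix_ifree C v i j w' : ifree i v ->
  (exec C v).1 = LP j :: w' -> j != i.
Proof.
elim: v C => [|[j0|j0] v IH] C //= /andP [Hj Hv].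
- case: ifP => _; last exact: IH.
  by case=> <- _.
- exact: IH.
Qed.

Lemma E1 i C v w2 : ifree i v -> C i = true ->
  stuckw (exec C (v ++ LP i :: w2)).2 (exec C (v ++ LP i :: w2)).1 /\
  (exec C (v ++ LP i :: w2)).2 i = true.
Proof.
move=> Hv Hi; rewrite exec_cat.
case: (exec_stuck C v) => [H | [j [w' [H1 H2]]]].
- rewrite H /=.
  have Hi' : (exec C v).2 i = true by rewrite exec_ifree_i.
  rewrite Hi' /=; split => //. by exists i, w2.
- rewrite H1 /=; split; first by exists j, (w' ++ LP i :: w2).
  by rewrite exec_ifree_i.
Qed.

Lemma agree i v : forall C C', v <> [::] -> ifree i v -> (exec C v).1 = [::] ->
  (exec C' v).1 = [::] -> forall x, x != i -> (exec C v).2 x = (exec C' v).2 x.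
Proof.
elim: v => [//|a v IH] C C' _ /andP [Ha Hv].
case: a Ha => j /= Hj.
- case: ifP => Hc //; case: ifP => Hc' // H1 H2 x Hx.
  case: v IH Hv H1 H2 => [|b v] IH Hv H1 H2.
  + by rewrite /= /upd (ord2_other Hx Hj) eqxx.
  + by apply: IH.
- move=> H1 H2 x Hx.
  case: v IH Hv H1 H2 => [|b v] IH Hv H1 H2.
  + by rewrite /= /upd (ord2_other Hx Hj) eqxx.
  + by apply: IH.
Qed.

Lemma upd_idem (C : store 2) i b b' : upd (upd C i b) i b' = upd C i b'.
Proof. apply: functional_extensionality => x; rewrite /upd; by case: (x == i). Qed.

Lemma E2 i C v w2 : v <> [::] -> ifree i v -> Good i C (v ++ LT i :: w2) ->
  Sec i (v ++ LT i :: w2).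
Proof.
move=> Hne Hv [w' Hg] C' HC'.
have Hcv : (exec C v).1 = [::].
  move: Hg; rewrite exec_cat.
  case: (exec_stuck C v) => [-> //| [j [w'' [H1 H2]]]].
  rewrite H1 /= => [[Hji _]].
  by move: (exec_suffix_ifree Hv H1); rewrite Hji eqxx.
rewrite exec_cat.
case: (exec_stuck C' v) => [H | [j [w'' [H1 H2]]]].
- rewrite H /=.
  have -> : upd (exec C' v).2 i false = upd (exec C v).2 i false.
    apply: functional_extensionality => x; rewrite /upd.
    case: ifP => // /negbT Hx.
    by rewrite (agree Hne Hv Hcv H Hx).
  move: Hg; rewrite exec_cat Hcv /= => Hg.
  case: (exec_stuck (upd (exec C v).2 i false) w2) => [H' | [j [w3 [H3 H4]]]].
  + by rewrite H' in Hg.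
  + rewrite H3 in Hg; case: Hg => Hji _; subst j.
    by split => //; exists i, w3.
- rewrite H1 /=; split; first by exists j, (w'' ++ LT i :: w2).
  by rewrite exec_ifree_i.
Qed.

Lemma decomp i w : ~~ ifree i w ->
  exists v x w2, w = v ++ x :: w2 /\ ifree i v /\ idx x = i.
Proof.
elim: w => [//|a w IH] /=.
case: (boolP (idx a != i)) => Ha /=.
- move=> /IH [v [x [w2 [-> [Hv Hx]]]]].
  by exists (a :: v), x, w2; rewrite /= Ha.
- move=> _; exists [::], a, w; split => //; split => //.
  by apply/eqP; rewrite negbK in Ha.
Qed.

Lemma good_has i C w : Good i C w -> ~~ ifree i w.
Proof.
move=> [w' H]; apply/negP => Hf.
by move: (exec_suffix_ifree Hf H); rewrite eqxx.
Qed.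

Lemma combine i C a b ea eb P : Good i C a -> Sec i b ->
  Permutation P [:: (a,ea); (b,eb)] ->
  exists P' D a' b', Permutation P' [:: (a',ea); (b',eb)] /\
    lock_reach (P,C) (P',D) /\ stuckw D a' /\ stuckw D b'.
Proof.
move=> [w' Ha] Hb HP.
have [P1 [HP1 Hr1]] := run_reach C HP.
have HD1 : (exec C a).2 i = true.
  case: (exec_stuck C a) => [H | [j [w'' [H1 H2]]]]; first by rewrite H in Ha.
  by rewrite H1 in Ha; case: Ha => <-.
set D1 := (exec C a).2 in HD1 Hr1.
rewrite Ha in HP1.
have HP1' : Permutation P1 ((b,eb) :: [:: (LP i :: w', ea)]).
  apply: (Permutation_trans HP1); exact: perm_swap.
have [P2 [HP2 Hr2]] := run_reach D1 HP1'.
have [Hs HD2] := Hb D1 HD1.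
exists P2, (exec D1 b).2, (LP i :: w'), (exec D1 b).1; split.
  apply: (Permutation_trans HP2); exact: perm_swap.
split; first by apply: rt_trans Hr2.
split => //; by exists i, w'.
Qed.

Lemma main i n : forall s r P C, size s + size r <= n ->
  Permutation P [:: (s,true); (r,false)] -> Good i C s -> Good i C r ->
  exists P' D s' r', Permutation P' [:: (s',true); (r',false)] /\
    lock_reach (P,C) (P',D) /\ stuckw D s' /\ stuckw D r'.
Proof.
elim: n => [|n IH] s r P C Hn HP Gs Gr.
  by case: s Hn Gs HP => [|? ?] //= _ [w' H].
have sw : forall (P' : lock_proc 2) s' r',
    Permutation P' [:: (r',false); (s',true)] ->
    Permutation P' [:: (s',true); (r',false)].
  move=> P' s' r' H; apply: (Permutation_trans H); exact: perm_swap.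
have RF : Sec i s -> exists P' D s' r', Permutation P' [:: (s',true); (r',false)] /\
    lock_reach (P,C) (P',D) /\ stuckw D s' /\ stuckw D r'.
  move=> Ss.
  have HP' : Permutation P [:: (r,false); (s,true)] by apply: (Permutation_trans HP); exact: perm_swap.
  have [P' [D [r' [s' [H1 [H2 [H3 H4]]]]]]] := combine Gr Ss HP'.
  by exists P', D, s', r'; split => //; apply: sw.
have [v [x [s2 [Es [Hv Hx]]]]] := decomp (good_has Gs).
have [u [y [r2 [Er [Hu Hy]]]]] := decomp (good_has Gr).
case: x Es Hx => j Es /= Hj; subst j.
  apply: RF; rewrite Es => C' HC'; exact: E1.
case: y Er Hy => j Er /= Hj; subst j.
  apply: (combine (b:=r) Gs) => //; rewrite Er => C' HC'; exact: E1.
case: v Es Hv => [|a v] Es Hv; last first.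
  apply: RF; rewrite Es; apply: (E2 (C:=C)) => //; by rewrite -Es.
case: u Er Hu => [|b u] Er Hu; last first.
  apply: (combine (b:=r) Gs) => //; rewrite Er; apply: (E2 (C:=C)) => //; by rewrite -Er.
rewrite /= in Es Er; subst s r.
set C0 := upd C i false.
have st1 : lock_reach (P,C) ([:: (s2,true); (LT i :: r2,false)], C0).
  apply: rt_step; exists (LT i), s2, true, [:: (LT i :: r2, false)]; by split.
have st2 : lock_reach ([:: (s2,true); (LT i :: r2,false)], C0)
                      ([:: (r2,false); (s2,true)], C0).
  apply: rt_step; exists (LT i), r2, false, [:: (s2, true)]; split.
    exact: perm_swap.
  by rewrite /C0 upd_idem.
have HP2 : Permutation [:: (r2,false); (s2,true)] [:: (s2,true); (r2,false)].
  exact: perm_swap.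
have Hn' : size s2 + size r2 <= n by move: Hn; rewrite /= addnS !addSn ltnS; apply: leqW.
have [P' [D [s' [r' [H1 [H2 [H3 H4]]]]]]] := IH s2 r2 _ C0 Hn' HP2 Gs Gr.
exists P', D, s', r'; split => //; split => //.
apply: rt_trans st1 _; exact: rt_trans st2 H2.
Qed.

Lemma rb_good C seen w i : run_block C seen w = Some (BPP i) -> Good i C w.
Proof.
elim: w C seen => [|[j|j] w IH] C seen //=.
- case: ifP => Hc.
  + case: (seen j) => // [[<-]]; exists w; by rewrite /= Hc.
  + rewrite /Good /= Hc; exact: IH.
- rewrite /Good /=; exact: IH.
Qed.

Lemma deadlock P' D s' r' : Permutation P' [:: (s',true); (r',false)] ->
  stuckw D s' -> stuckw D r' -> ~ lock_may_state (P',D).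
Proof.
move=> HP Hs Hr.
have nostep : forall t, ~ lock_step (P',D) t.
  move=> t [a [w [e [R [HP2 Hm]]]]].
  have Hin : List.In (a :: w, e) [:: (s',true); (r',false)].
    apply: (Permutation_in _ HP); apply: (Permutation_in _ (Permutation_sym HP2)).
    by left.
  have [j [w0 [Ew Dj]]] : stuckw D (a :: w).
    case: Hin => [[<- _] //| [[<- _] //| []]].
  case: Ew => Ea _; subst a.
  by case: Hm; rewrite Dj.
have stay : forall x y, lock_reach x y -> x = (P',D) -> y = (P',D).
  move=> x y; elim => [x0 y0 Hxy E|x0 E //|x0 y0 z0 _ IH1 _ IH2 E].
  - by subst x0; case: (nostep _ Hxy).
  - by apply: IH2; apply: IH1.
move=> [t [Hr1 Hsucc]].
rewrite (stay _ _ Hr1 erefl) /lock_successful /= in Hsucc.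
have Hin := Permutation_in _ HP Hsucc.
case: Hin => [E|[E|[]]]; last by case: E.
case: E => E.
by case: Hs => j [w0 [E' _]]; rewrite E in E'.
Qed.

Definition P0 : sync_proc := [:: SSend SCheck; SRecv SZero].
Definition Pf : sync_proc := [:: SCheck; SZero].

Lemma in2 {A} (x a b : A) : List.In x [:: a; b] -> x = a \/ x = b.
Proof. by case=> [->|[->|[]]]; [left|right]. Qed.

Lemma sync_reach_P0 : forall x y, sync_reach x y -> (x = P0 \/ x = Pf) -> (y = P0 \/ y = Pf).
Proof.
move=> x y; elim => [x0 y0 [u1 [u2 [R [HP ->]]]]|x0 //|x0 y0 z0 _ IH1 _ IH2] E.
- have H1 : List.In (SSend u1) x0.
    by apply: (Permutation_in _ (Permutation_sym HP)); left.
  have H2 : List.In (SRecv u2) x0.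
    by apply: (Permutation_in _ (Permutation_sym HP)); right; left.
  case: E => E; subst x0.
  + have Hl := Permutation_length HP.
    case: R HP Hl => [|? ?] HP Hl //.
    case: (in2 H1) => // [[->]]; case: (in2 H2) => // [[->]].
    by right.
  + by case: (in2 H1).
- by apply: IH2; apply: IH1.
Qed.

Lemma sync_must_P0 : sync_must P0.
Proof.
move=> Q HQ.
case: (sync_reach_P0 HQ (or_introl erefl)) => ->.
- exists Pf; split; last by left.
  apply: rt_step; exists SCheck, SZero, [::]; split => //.
- exists Pf; split; [apply: rt_refl | by left].
Qed.

Unset Implicit Arguments.

Theorem proposition5p1 (IS : store 2) (wsend wrecv : seq (lsym 2)) (i j : 'I_2) :
  correct_translation IS wsend wrecv ->
  blocking_type IS wsend = Some (BPP i) ->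
  blocking_type IS wrecv = Some (BPP j) ->
  i <> j.
Proof.
move=> Hc Hs Hr Hij; subst j.
have Gs := rb_good Hs.
have Gr := rb_good Hr.
have Hm := proj1 (proj2 (Hc P0)) sync_must_P0.
rewrite /lock_must /tau /= !cats0 in Hm.
have [P' [D [s' [r' [H1 [H2 [H3 H4]]]]]]] :=
  main (leqnn _) (Permutation_refl [:: (wsend,true); (wrecv,false)]) Gs Gr.
exact: (deadlock H1 H3 H4 (Hm _ H2)).
Qed.
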